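(* Let $g$ be a nondegenerate symmetric bilinear form on $\mathbb{R}^n$, $P\subset\mathbb{R}^n$ a subspace, $R:[0,1]\to\mathcal L(\mathbb{R}^n)$ continuous, and $Y:[0,1]\to\mathbb{R}^n$ a solution of $Y''=RY$ with $g(Y,Y)<0$ on $[0,1]$. Then the map $[0,1]\ni t\mapsto F_t\in\mathcal L(\mathcal H,\widetilde{\mathcal H})$ is of class $C^1$.
   Context: $\mathcal H=\{\hat V\in H^1([0,1],\mathbb{R}^n):\hat V(0)\in P,\hat V(1)=0\}$ with the $H^1$ norm; $\widetilde{\mathcal H}=L^2([0,1],\mathbb{R})/\mathfrak C$ with $\mathfrak C$ the constant functions; $\mathcal L(\mathcal H,\widetilde{\mathcal H})$ carries the operator norm. $F_t(\hat V)(u)=g(\hat V'(u),Y(tu))-t\,g(\hat V(u),Y'(tu))+\mathfrak C$. *)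

(* Defs.v *)
From HB Require Import structures.
From mathcomp Require Import all_boot all_order all_algebra.
From mathcomp Require Import all_classical all_reals all_analysis.
Set Implicit Arguments. Unset Strict Implicit. Unset Printing Implicit Defensive.
Import Order.TTheory GRing.Theory Num.Theory.
Import numFieldNormedType.Exports.
Local Open Scope classical_set_scope.
Local Open Scope ring_scope.

(* Points of R^n are row vectors 'rV[R]_n; an endomorphism of R^n is a
   matrix A : 'M[R]_n acting (mathcomp convention) on the right: v |-> v *m A.
   A subspace P of R^n is the row space of a matrix P : 'M[R]_n. *)

Definition sqn (R : realType) (n : nat) (v : 'rV[R]_n) : R :=
  \sum_(i < n) v ord0 i ^+ 2.

Definition sym_nondeg_bilinear (R : realType) (n : nat)
    (g : 'rV[R]_n -> 'rV[R]_n -> R) : Prop :=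
  (forall (a : R) (x y z : 'rV[R]_n), g (a *: x + y) z = a * g x z + g y z) /\
  (forall x y, g x y = g y x) /\
  (forall x, (forall y, g x y = 0) -> x = 0).

(* (V, W) represents an element V of
   H = {V in H^1([0,1],R^n) : V(0) in P, V(1) = 0},
   W being (a representative of) its weak derivative V' in L^2:
   V is the absolutely continuous function V(u) = V(0) + int_0^u W. *)
Definition inH (R : realType) (n : nat) (P : 'M[R]_n)
    (V W : R -> 'rV[R]_n) : Prop :=
  (forall i : 'I_n,
     (@lebesgue_measure R).-integrable `[0%R, 1%R] (fun s => (W s ord0 i)%:E)) /\
  (\int[@lebesgue_measure R]_(s in `[0%R, 1%R]) (sqn (W s))%:E < +oo)%E /\
  (forall u, u \in `[0%R, 1%R] ->
     V u = V 0 + \row_(i < n)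
             fine (\int[@lebesgue_measure R]_(s in `[0%R, u]) (W s ord0 i)%:E)) /\
  (V 0 <= P)%MS /\ V 1 = 0.

Definition Hnorm2 (R : realType) (n : nat) (V W : R -> 'rV[R]_n) : \bar R :=
  \int[@lebesgue_measure R]_(s in `[0%R, 1%R]) (sqn (V s) + sqn (W s))%R%:E.

Definition L2dist2_const (R : realType) (f : R -> R) (c : R) : \bar R :=
  \int[@lebesgue_measure R]_(s in `[0%R, 1%R]) ((f s - c) ^+ 2)%:E.

(* squared norm of the class of f in L^2([0,1],R)/constants:
   the infimum over constants c of the squared L^2 distance from f to c *)
Definition Qnorm2 (R : realType) (f : R -> R) : \bar R :=
  ereal_inf ((L2dist2_const f) @` [set: R]).

(* F_t(V)(u) = g(V'(u), Y(tu)) - t g(V(u), Y'(tu))  (modulo constants) *)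
Definition Fop (R : realType) (n : nat) (g : 'rV[R]_n -> 'rV[R]_n -> R)
    (Y : R -> 'rV[R]_n) (t : R) (V W : R -> 'rV[R]_n) : R -> R :=
  fun u => g (W u) (Y (t * u)) - t * g (V u) (derive1 Y (t * u)).

(* A family (t in [0,1]) of maps F t : H -> L^2/C is of class C^1 into the
   space L(H, L^2/C) with the operator norm: each F t is bounded, and there is
   a family G t of bounded operators H -> L^2/C, continuous in t for the
   operator norm, which is the derivative (one-sided at the endpoints)
   of t |-> F t in operator norm.  Norms are squared throughout. *)
Definition C1_opfamily (R : realType) (n : nat) (P : 'M[R]_n)
    (F : R -> (R -> 'rV[R]_n) -> (R -> 'rV[R]_n) -> R -> R) : Prop :=
  (forall t : R, t \in `[0%R, 1%R] -> exists C : R, forall V W, inH P V W ->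
      (Qnorm2 (F t V W) <= C%:E * Hnorm2 V W)%E) /\
  exists G : R -> (R -> 'rV[R]_n) -> (R -> 'rV[R]_n) -> R -> R,
    (forall (t : R) V W, t \in `[0%R, 1%R] -> inH P V W ->
       measurable_fun (`[0%R, 1%R] : set R) (G t V W)) /\
    (forall t : R, t \in `[0%R, 1%R] -> exists C : R, forall V W, inH P V W ->
       (Qnorm2 (G t V W) <= C%:E * Hnorm2 V W)%E) /\
    (forall t : R, t \in `[0%R, 1%R] -> forall eps : R, 0 < eps ->
       exists2 delta : R, 0 < delta & forall s : R, s \in `[0%R, 1%R] ->
         `|s - t| < delta -> forall V W, inH P V W ->
         (Qnorm2 (fun u => F s V W u - F t V W u - (s - t) * G t V W u)%R
            <= ((eps * (s - t)) ^+ 2)%R%:E * Hnorm2 V W)%E) /\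
    (forall t : R, t \in `[0%R, 1%R] -> forall eps : R, 0 < eps ->
       exists2 delta : R, 0 < delta & forall s : R, s \in `[0%R, 1%R] ->
         `|s - t| < delta -> forall V W, inH P V W ->
         (Qnorm2 (fun u => G s V W u - G t V W u)%R
            <= (eps ^+ 2)%R%:E * Hnorm2 V W)%E).

(* Main.v *)
Require Import Defs.
From HB Require Import structures.
From mathcomp Require Import all_boot all_order all_algebra.
From mathcomp Require Import all_classical all_reals all_analysis.
From mathcomp Require Import ring lra.
Import Order.TTheory GRing.Theory Num.Theory.
Import numFieldNormedType.Exports.
Local Open Scope classical_set_scope.
Local Open Scope ring_scope.

Set Implicit Arguments. Unset Strict Implicit. Unset Printing Implicit Defensive.

Section S.
Context {R : realType}.

Lemma within_ed (k : R -> R) x : {within `[0, 1], continuous k} -> x \in `[0, 1] ->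
  forall e, 0 < e -> exists2 r, 0 < r & forall z, z \in `[0, 1] -> `|x - z| < r -> `|k x - k z| < e.
Proof.
move=> ck x01 e e0.
have := ck x; rewrite /continuous_at.
have [_|] := nbhs_subspaceP (`[0, 1] : set R) x; last by rewrite /= x01.
move/cvgrPdist_lt => /(_ e e0).
rewrite /= near_withinE /= => /nbhs_ballP [r /= r0 Hr].
exists r => // z z01 xz; apply: Hr => //.
Qed.

Lemma unif_cont (k : R -> R) : {within `[0, 1], continuous k} ->
  forall e, 0 < e -> exists2 d, 0 < d & forall x z, x \in `[0, 1] -> z \in `[0, 1] ->
   `|x - z| < d -> `|k x - k z| < e.
Proof.
move=> ck e e0.
have /compact_near_coveringP/near_covering_withinP NC := @segment_compact R 0 1.
pose I01 := (`[0, 1]%classic : set R).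
have H : forall x, I01 x -> \forall x' \near x & i \near (0:R)^'+, I01 x' ->
   (forall z, z \in `[0, 1] -> `|x' - z| < i -> `|k x' - k z| < e).
  move=> x x01.
  have [r r0 Hr] := within_ed ck x01 (divr_gt0 e0 (ltr0n R 2)).
  have r20 : 0 < r / 2 by exact: divr_gt0.
  exists ([set y | `|x - y| < r / 2], [set d | 0 < d < r / 2]).
    split => /=.
      by apply/nbhs_ballP; exists (r / 2) => //.
    apply/nbhs_ballP; exists (r / 2) => //=.
    move=> d; rewrite /ball /= sub0r normrN => hd d0; rewrite d0 /=.
    by rewrite (le_lt_trans (ler_norm _)).
  case=> x' d /= [xx' /andP[d0 dr]] x'01 z z01 x'z.
  have xz : `|x - z| < r.
    rewrite -(subrKA x') (le_lt_trans (ler_normD _ _))// (splitr r) ltrD//.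
    exact: lt_trans x'z dr.
  have xx'r : `|x - x'| < r by lra.
  have := Hr _ z01 xz; have := Hr _ x'01 xx'r.
  move=> h1 h2.
  rewrite -(subrKA (k x)); apply: (le_lt_trans (ler_normD _ _)); rewrite (distrC (k x')); lra.

have [dd [d0 Hd]] : exists d, 0 < d /\ I01 `<=` (fun x => forall z, z \in `[0, 1] -> `|x - z| < d -> `|k x - k z| < e).
  have := NC _ _ _ _ H.
  rewrite near_withinE /= => /(_ _) /nbhs_ballP [r /= r0 Hr].
  exists (r / 2); split; first exact: divr_gt0.
  apply: Hr; last exact: divr_gt0.
  by rewrite /ball /= sub0r normrN gtr0_norm ?divr_gt0// ltr_pdivrMr// ltr_pMr// ltr1n.
exists dd => // x z x01 z01 xz; exact: Hd.
Qed.

Lemma bnd (k : R -> R) : {within `[0, 1], continuous k} ->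
  exists M, 0 <= M /\ forall x, x \in `[0, 1] -> `|k x| <= M.
Proof.
move=> ck.
have [c1 _ H1] := EVT_max ler01 ck.
have [c2 _ H2] := EVT_min ler01 ck.
exists (`|k c1| + `|k c2|); split; first by rewrite addr_ge0.
move=> x x01; have := H1 _ x01; have := H2 _ x01.
have := ler_norm (k c1); have := lerNnormlW (lexx `|k c2|).
have := normr_ge0 (k c1); have := normr_ge0 (k c2).
rewrite ler_norml => ? ? a b c d; apply/andP; split; lra.
Qed.

Lemma mvt_pair (h k : R -> R) : {within `[0, 1], continuous h} ->
  (forall x : R, x \in `]0, 1[ -> is_derive x 1 h (k x)) ->
  forall a b : R, a \in `[0, 1] -> b \in `[0, 1] -> a != b ->
  exists c, [/\ c \in `[0, 1], `|c - b| <= `|a - b| & h a - h b = k c * (a - b)].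
Proof.
move=> ch dh a b; rewrite !in_itv /= => /andP[a0 a1] /andP[b0 b1] ab.
have sub : forall a' b', 0 <= a' -> b' <= 1 -> (`[a', b']%classic : set R) `<=` `[0, 1]%classic.
  move=> a' b' ha hb x /=; rewrite !in_itv /= => /andP[? ?]; apply/andP; split; lra.
have der : forall a' b' : R, 0 <= a' -> b' <= 1 -> forall x : R, x \in `]a', b'[ -> is_derive x 1 h (k x).
  move=> a' b' ha hb x; rewrite in_itv /= => /andP[? ?]; apply: dh; rewrite in_itv /=; apply/andP; split; lra.
case: (ltgtP a b) ab => // [ab|ba] _.
- have [c cab hc] := MVT ab (der _ _ a0 b1) (continuous_subspaceW (sub _ _ a0 b1) ch).
  move: cab; rewrite in_itv /= => /andP[c1 c2].
  exists c; split.
  + rewrite in_itv /=; apply/andP; split; lra.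
  + rewrite !ltr0_norm ?subr_lt0 //; lra.
  + lra.
- have [c cab hc] := MVT ba (der _ _ b0 a1) (continuous_subspaceW (sub _ _ b0 a1) ch).
  move: cab; rewrite in_itv /= => /andP[c1 c2].
  exists c; split.
  + rewrite in_itv /=; apply/andP; split; lra.
  + rewrite !gtr0_norm ?subr_gt0 //; lra.
  + lra.
Qed.

Lemma tay (h k : R -> R) : {within `[0, 1], continuous h} ->
  (forall x : R, x \in `]0, 1[ -> is_derive x 1 h (k x)) ->
  {within `[0, 1], continuous k} ->
  forall e, 0 < e -> exists2 d, 0 < d & forall s t u : R, s \in `[0, 1] -> t \in `[0, 1] ->
   u \in `[0, 1] -> `|s - t| < d ->
   `|h (s * u) - h (t * u) - (s - t) * (u * k (t * u))| <= e * `|s - t|.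
Proof.
move=> ch dh ck e e0.
have [d d0 Hd] := unif_cont ck e0.
exists d => // s t u s01 t01 u01 std.
have mul01 : forall a b : R, a \in `[0, 1] -> b \in `[0, 1] -> a * b \in `[0, 1].
  move=> a b; rewrite !in_itv /= => /andP[? ?] /andP[? ?]; apply/andP; split.
    exact: mulr_ge0.
  by rewrite mulr_ile1.
have su01 := mul01 _ _ s01 u01; have tu01 := mul01 _ _ t01 u01.
have [/eqP eq|neq] := boolP (s * u == t * u).
  rewrite eq subrr sub0r normrN mulrA mulrBl eq subrr mul0r normr0.
  by rewrite mulr_ge0 // ltW.
have [c [c01 cb hc]] := mvt_pair ch dh su01 tu01 neq.
move: u01; rewrite in_itv /= => /andP[u0 u1].
have e1 : `|s * u - t * u| = `|s - t| * u by rewrite -mulrBl normrM (ger0_norm u0).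
have e2 : `|s - t| * u <= `|s - t| by rewrite ler_piMr.
have kc : `|k c - k (t * u)| < e.
  apply: Hd => //; lra.
rewrite hc mulrA -mulrBl (mulrC (k c)) -mulrBr normrM.
have e3 : `|(s - t) * u| <= `|s - t| by rewrite normrM (ger0_norm u0) ler_piMr.
rewrite [X in _ <= X]mulrC; apply: ler_pM => //; exact: ltW.
Qed.
Lemma wc_coord (m p : nat) (Y : R -> 'M[R]_(m, p)) (A : set R) i j :
  {within A, continuous Y} -> {within A, continuous (fun x => Y x i j)}.
Proof. move=> cY x; exact: (@continuous_comp _ _ _ (from_subspace A Y) (fun M : 'M[R]_(m, p) => M i j) x (cY x) (@coord_continuous _ _ _ i j (Y x))). Qed.

Lemma wc_mul (A : set R) (f g : R -> R) :
  {within A, continuous f} -> {within A, continuous g} ->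
  {within A, continuous (fun x => f x * g x)}.
Proof. move=> cf cg x; exact: (continuousM (cf x) (cg x)). Qed.

Lemma wc_add (A : set R) (f g : R -> R) :
  {within A, continuous f} -> {within A, continuous g} ->
  {within A, continuous (fun x => f x + g x)}.
Proof. move=> cf cg x; exact: (continuousD (cf x) (cg x)). Qed.

Lemma wc_cst (A : set R) (c : R) : {within A, continuous (fun _ : R => c)}.
Proof. move=> x; exact: cvg_cst. Qed.

Lemma wc_sum (A : set R) (n : nat) (f : 'I_n -> R -> R) :
  (forall j, {within A, continuous (f j)}) ->
  {within A, continuous (fun x => \sum_(j < n) f j x)}.
Proof.
move=> cf.
have -> : (fun x => \sum_(j < n) f j x) = \sum_(j < n) f j.
  by apply/funext => x; rewrite fct_sumE.
elim/big_ind : _ => //.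
- exact: wc_cst.
- by move=> g h cg ch; exact: wc_add.
Qed.

Lemma der_coord (n : nat) (Y : R -> 'rV[R]_n) (x : R) j :
  derivable Y x 1 -> is_derive x 1 (fun x => Y x ord0 j) (derive1 Y x ord0 j).
Proof.
move=> dY.
have dj := (derivable_mxP _ _ _).1 dY ord0 j.
rewrite derive1E (derive_mx dY) mxE.
exact: derivableP.
Qed.

Lemma der_comb (n : nat) (f df : 'I_n -> R -> R) (c : 'I_n -> R) (x : R) :
  (forall j, is_derive x 1 (f j) (df j x)) ->
  is_derive x 1 (fun x => \sum_(j < n) c j * f j x) (\sum_(j < n) c j * df j x).
Proof.
move=> H.
have -> : (fun x => \sum_(j < n) c j * f j x) = \sum_(j < n) (fun x => c j * f j x).
  by apply/funext => y; rewrite fct_sumE.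
by apply: is_derive_sum => j.
Qed.

Lemma sq_bnd (a m : R) : `|a| <= m -> a ^+ 2 <= m ^+ 2.
Proof. move=> h; have := ler_norm a; have := lerNnormlW (lexx `|a|); nra. Qed.

Lemma sum_sq2 n (z : 'I_n -> R) :
  (\sum_(i < n) z i) ^+ 2 <= 2 ^+ n * \sum_(i < n) z i ^+ 2.
Proof.
elim: n z => [|n IH] z; first by rewrite !big_ord0 expr0n /= mul1r.
rewrite !big_ord_recr /=.
have := IH (fun i => z (widen_ord (leqnSn n) i)).
set S := \sum_(i < n) _; set Q := \sum_(i < n) _.
have Q0 : 0 <= Q by apply: sumr_ge0 => i _; exact: sqr_ge0.
have p0 : 0 <= 2 ^+ n :> R by apply: exprn_ge0.
move=> h; rewrite [2 ^+ n.+1]exprS.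
have p1 : 1 <= 2 ^+ n :> R by rewrite exprn_ege1 //; lra.
have h2 := sqr_ge0 (S - z ord_max).
have h3 : z ord_max ^+ 2 <= 2 ^+ n * z ord_max ^+ 2 by rewrite ler_peMl // sqr_ge0.
nra.
Qed.

Lemma pb n (w v A B : 'I_n -> R) (m : R) :
  (forall i, `|A i| <= m /\ `|B i| <= m) ->
  (\sum_(i < n) (w i * A i + v i * B i)) ^+ 2 <=
  2 ^+ n.+1 * m ^+ 2 * (\sum_(i < n) v i ^+ 2 + \sum_(i < n) w i ^+ 2).
Proof.
move=> hb; apply: (le_trans (sum_sq2 _)).
rewrite exprS -mulrA -[X in _ <= X]mulrA mulrCA ler_wpM2l ?exprn_ge0 //.
rewrite -big_split /= !mulr_sumr.
apply: ler_sum => i _.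
have [ha hb'] := hb i.
have := sq_bnd ha; have := sq_bnd hb'.
have := sqr_ge0 (w i * A i - v i * B i).
have := sqr_ge0 (w i); have := sqr_ge0 (v i).
move=> h1 h2 h3 h4 h5.
have h6 := ler_wpM2l h1 h4. have h7 := ler_wpM2l h2 h5.
nra.
Qed.

Lemma meas_W n (P : 'M[R]_n) (V W : R -> 'rV[R]_n) :
  inH P V W -> forall i, measurable_fun (`[0%R, 1%R] : set R) (fun u => W u ord0 i).
Proof. case=> HW _ i. have h := measurable_int _ (HW i). by apply/measurable_realfun.measurable_EFinP. Qed.

Lemma meas_V n (P : 'M[R]_n) (V W : R -> 'rV[R]_n) :
  inH P V W -> forall i, measurable_fun (`[0%R, 1%R] : set R) (fun u => V u ord0 i).
Proof.
case=> HW [_ [HV _]] i.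
have c := parameterized_integral_continuous ler01 (HW i).
have m1 : measurable_fun (`[0%R, 1%R] : set R) (fun x => V 0 ord0 i +
   parameterized_integral (@lebesgue_measure R) 0 x (fun s => W s ord0 i)).
  apply: measurable_realfun.measurable_funD; first exact: measurable_cst.
  exact: measurable_realfun.subspace_continuous_measurable_fun.
apply: eq_measurable_fun m1 => u; rewrite inE /= => u01.
by rewrite (HV u u01) !mxE.
Qed.

Lemma meas_comp (k : R -> R) (s : R) : measurable_fun (`[0%R, 1%R] : set R) k -> s \in `[0, 1] ->
  measurable_fun (`[0%R, 1%R] : set R) (fun u => k (s * u)).
Proof.
move=> mk s01.
have mk' := (measurable_restrictT k (measurable_itv `[0%R, 1%R])).1 mk.
have m2 := measurableT_comp mk' (measurable_realfun.mulrl_measurable s).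
have m3 : measurable_fun (`[0%R, 1%R] : set R) ((k \_ `[0%R, 1%R]) \o ( *%R s)) := m2 _.
apply: eq_measurable_fun m3 => u; rewrite inE /= => u01.
rewrite patchE ifT //; rewrite inE /=.
move: s01 u01; rewrite !in_itv /= => /andP[? ?] /andP[? ?]; apply/andP; split.
  exact: mulr_ge0.
by rewrite mulr_ile1.
Qed.

Lemma KB n (P : 'M[R]_n) (V W : R -> 'rV[R]_n) (A B : 'I_n -> R -> R) (f : R -> R) (m : R) :
  inH P V W ->
  (forall i, measurable_fun (`[0%R, 1%R] : set R) (A i)) ->
  (forall i, measurable_fun (`[0%R, 1%R] : set R) (B i)) ->
  (forall i u, u \in `[0, 1] -> `|A i u| <= m /\ `|B i u| <= m) ->
  (forall u, u \in `[0, 1] -> f u = \sum_(i < n) (W u ord0 i * A i u + V u ord0 i * B i u)) ->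
  (Qnorm2 f <= (2 ^+ n.+1 * m ^+ 2)%:E * Hnorm2 V W)%E.
Proof.
move=> hH mA mB hb feq.
have mI : measurable (`[0%R, 1%R] : set R) := measurable_itv _.
have mf : measurable_fun (`[0%R, 1%R] : set R) f.
  have ms : measurable_fun (`[0%R, 1%R] : set R)
      (fun u => \sum_(i < n) (W u ord0 i * A i u + V u ord0 i * B i u)).
    apply: measurable_sum => i; apply: measurable_realfun.measurable_funD;
      apply: measurable_realfun.measurable_funM.
    - exact: meas_W hH i.
    - exact: mA.
    - exact: meas_V hH i.
    - exact: mB.
  by apply: eq_measurable_fun ms => u; rewrite inE /= => u01; rewrite feq.
have mS : measurable_fun (`[0%R, 1%R] : set R) (fun u => sqn (V u) + sqn (W u)).
  apply: measurable_realfun.measurable_funD; apply: measurable_sum => i;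
    apply: measurable_realfun.measurable_funX; [exact: meas_V hH i | exact: meas_W hH i].
have K0 : 0 <= 2 ^+ n.+1 * m ^+ 2 by apply: mulr_ge0; [apply: exprn_ge0; lra | exact: sqr_ge0].
apply: (@le_trans _ _ (L2dist2_const f 0)).
  by apply: ereal_inf_lbound; exists 0.
rewrite /L2dist2_const /Hnorm2 -ge0_integralZl //; first last.
- move=> x _; rewrite lee_fin; apply: addr_ge0; apply: sumr_ge0 => i _; exact: sqr_ge0.
- exact/measurable_realfun.measurable_EFinP.
apply: ge0_le_integral => //.
- by move=> x _; rewrite lee_fin sqr_ge0.
- apply/measurable_realfun.measurable_EFinP; apply: measurable_realfun.measurable_funX.
  apply: measurable_realfun.measurable_funB => //; exact: measurable_cst.
- apply: measurable_funeM; exact/measurable_realfun.measurable_EFinP.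
- move=> x x01; rewrite -EFinM lee_fin subr0 (feq x x01).
  by apply: pb => i; apply: hb.
Qed.
Lemma fam_bnd n (k : 'I_n -> R -> R) :
  (forall i, exists M, 0 <= M /\ forall x, x \in `[0, 1] -> `|k i x| <= M) ->
  exists M, 0 <= M /\ forall i x, x \in `[0, 1] -> `|k i x| <= M.
Proof.
move=> H; have [Mf HM] := choice H.
exists (\sum_(i < n) Mf i); split.
  by apply: sumr_ge0 => i _; case: (HM i).
move=> i x x01; case: (HM i) => M0 /(_ x x01) hx.
apply: (le_trans hx); rewrite (bigD1 i) //= lerDl.
by apply: sumr_ge0 => j _; case: (HM j).
Qed.

Lemma fam_delta n (Q : 'I_n -> R -> R -> Prop) :
  (forall i, exists2 d, 0 < d & forall s t, `|s - t| < d -> Q i s t) ->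
  exists2 d, 0 < d & forall i s t, `|s - t| < d -> Q i s t.
Proof.
move=> H.
have H' : forall i, exists d, 0 < d /\ forall s t, `|s - t| < d -> Q i s t.
  by move=> i; case: (H i) => d d0 hd; exists d.
have [df Hd] := choice H'.
have S0 : 0 <= \sum_(i < n) (df i)^-1.
  by apply: sumr_ge0 => i _; case: (Hd i) => d0 _; rewrite invr_ge0 ltW.
exists (1 + \sum_(i < n) (df i)^-1)^-1; first by rewrite invr_gt0; lra.
move=> i s t st; case: (Hd i) => d0 hd; apply: hd.
apply: (lt_le_trans st).
have di : (df i)^-1 <= 1 + \sum_(i < n) (df i)^-1.
  rewrite (bigD1 i) //=.
  have : 0 <= \sum_(j < n | j != i) (df j)^-1.
    by apply: sumr_ge0 => j _; case: (Hd j) => dj _; rewrite invr_ge0 ltW.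
  lra.
rewrite -(invrK (df i)) lef_pV2 ?posrE //; last by rewrite invr_gt0.
lra.
Qed.

Lemma glin n (g : 'rV[R]_n -> 'rV[R]_n -> R) : sym_nondeg_bilinear g ->
  forall x y, g x y = \sum_(i < n) x ord0 i * \sum_(j < n) g (delta_mx 0 i) (delta_mx 0 j) * y ord0 j.
Proof.
case=> lin [sym _].
have g0 : forall z, g 0 z = 0.
  move=> z; have := lin 1 0 0 z; rewrite scale1r addr0 mul1r; lra.
have gadd : forall a b z, g (a + b) z = g a z + g b z.
  by move=> a b z; rewrite -(scale1r a) lin mul1r scale1r.
have gsc : forall a b z, g (a *: b) z = a * g b z.
  by move=> a b z; rewrite -(addr0 (a *: b)) lin g0 addr0.
have gsum : forall (a : 'I_n -> R) (e : 'I_n -> 'rV[R]_n) z,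
    g (\sum_(i < n) a i *: e i) z = \sum_(i < n) a i * g (e i) z.
  move=> a e z; elim/big_ind2 : _ => //.
  by move=> x1 x2 y1 y2 <- <-; rewrite gadd.
move=> x y.
rewrite {1}(row_sum_delta x) gsum; apply: eq_bigr => i _; congr (_ * _).
rewrite sym {1}(row_sum_delta y) gsum; apply: eq_bigr => j _.
by rewrite sym mulrC.
Qed.

Lemma mul01 (a b : R) : a \in `[0, 1] -> b \in `[0, 1] -> a * b \in `[0, 1].
Proof.
rewrite !in_itv /= => /andP[? ?] /andP[? ?]; apply/andP; split.
  exact: mulr_ge0.
by rewrite mulr_ile1.
Qed.

Lemma meas_h (h : R -> R) : {within `[0, 1], continuous h} ->
  measurable_fun (`[0%R, 1%R] : set R) h.
Proof. move=> ch; exact: measurable_realfun.subspace_continuous_measurable_fun. Qed.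

Lemma meas_form n (P : 'M[R]_n) (V W : R -> 'rV[R]_n) (A B : 'I_n -> R -> R) :
  inH P V W ->
  (forall i, measurable_fun (`[0%R, 1%R] : set R) (A i)) ->
  (forall i, measurable_fun (`[0%R, 1%R] : set R) (B i)) ->
  measurable_fun (`[0%R, 1%R] : set R)
      (fun u => \sum_(i < n) (W u ord0 i * A i u + V u ord0 i * B i u)).
Proof.
move=> hH mA mB.
apply: measurable_sum => i; apply: measurable_realfun.measurable_funD;
  apply: measurable_realfun.measurable_funM.
- exact: meas_W hH i.
- exact: mA.
- exact: meas_V hH i.
- exact: mB.
Qed.

Lemma meas_mulid (k : R -> R) : measurable_fun (`[0%R, 1%R] : set R) k ->
  measurable_fun (`[0%R, 1%R] : set R) (fun u => u * k u).
Proof. move=> mk; apply: measurable_realfun.measurable_funM => //; exact: measurable_id. Qed.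

Lemma meas_scal (c : R) (k : R -> R) : measurable_fun (`[0%R, 1%R] : set R) k ->
  measurable_fun (`[0%R, 1%R] : set R) (fun u => c * k u).
Proof. move=> mk; apply: measurable_realfun.measurable_funM => //; exact: measurable_cst. Qed.

Lemma meas_opp (k : R -> R) : measurable_fun (`[0%R, 1%R] : set R) k ->
  measurable_fun (`[0%R, 1%R] : set R) (fun u => - k u).
Proof. move=> mk; exact: measurable_realfun.measurable_funN. Qed.

Lemma meas_add (k l : R -> R) : measurable_fun (`[0%R, 1%R] : set R) k ->
  measurable_fun (`[0%R, 1%R] : set R) l ->
  measurable_fun (`[0%R, 1%R] : set R) (fun u => k u + l u).
Proof. move=> mk ml; exact: measurable_realfun.measurable_funD. Qed.

Lemma meas_sub (k l : R -> R) : measurable_fun (`[0%R, 1%R] : set R) k ->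
  measurable_fun (`[0%R, 1%R] : set R) l ->
  measurable_fun (`[0%R, 1%R] : set R) (fun u => k u - l u).
Proof. move=> mk ml; exact: measurable_realfun.measurable_funB. Qed.

Lemma tay_fam n (h k : 'I_n -> R -> R) :
  (forall i, {within `[0, 1], continuous (h i)}) ->
  (forall i (x : R), x \in `]0, 1[ -> is_derive x 1 (h i) (k i x)) ->
  (forall i, {within `[0, 1], continuous (k i)}) ->
  forall e, 0 < e -> exists2 d, 0 < d & forall i (s t u : R), s \in `[0, 1] -> t \in `[0, 1] ->
   u \in `[0, 1] -> `|s - t| < d ->
   `|h i (s * u) - h i (t * u) - (s - t) * (u * k i (t * u))| <= e * `|s - t|.
Proof.
move=> ch dh ck e e0.
have := @fam_delta n (fun i s t => forall u, s \in `[0, 1] -> t \in `[0, 1] ->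
   u \in `[0, 1] -> `|h i (s * u) - h i (t * u) - (s - t) * (u * k i (t * u))| <= e * `|s - t|).
case.
  move=> i; have [d d0 Hd] := tay (ch i) (dh i) (ck i) e0.
  by exists d => // s t st u s01 t01 u01; apply: Hd.
move=> d d0 Hd; exists d => // i s t u s01 t01 u01 st; exact: Hd.
Qed.

Lemma unif_fam n (k : 'I_n -> R -> R) :
  (forall i, {within `[0, 1], continuous (k i)}) ->
  forall e, 0 < e -> exists2 d, 0 < d & forall i (x z : R), x \in `[0, 1] -> z \in `[0, 1] ->
   `|x - z| < d -> `|k i x - k i z| < e.
Proof.
move=> ck e e0.
have := @fam_delta n (fun i x z => x \in `[0, 1] -> z \in `[0, 1] -> `|k i x - k i z| < e).
case.
  move=> i; have [d d0 Hd] := unif_cont (ck i) e0.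
  by exists d => // x z xz x01 z01; apply: Hd.
move=> d d0 Hd; exists d => // i x z x01 z01 xz; exact: Hd.
Qed.

Lemma Hnorm2_ge0 n (V W : R -> 'rV[R]_n) : (0 <= Hnorm2 V W)%E.
Proof.
apply: integral_ge0 => x _; rewrite lee_fin.
by apply: addr_ge0; apply: sumr_ge0 => i _; exact: sqr_ge0.
Qed.

Lemma le_H n (V W : R -> 'rV[R]_n) (x y : R) : x <= y ->
  (x%:E * Hnorm2 V W <= y%:E * Hnorm2 V W)%E.
Proof. by move=> xy; apply: lee_wpmul2r; [exact: Hnorm2_ge0 | rewrite lee_fin]. Qed.

Lemma Nbound (N eps : R) : 1 <= N -> N * (eps / N) ^+ 2 <= eps ^+ 2.
Proof.
move=> N1; have N0 : 0 < N by lra.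
have -> : N * (eps / N) ^+ 2 = eps ^+ 2 / N by field; lra.
by rewrite ler_pdivrMr // ler_peMr // sqr_ge0.
Qed.

Lemma in01 (t : R) : t \in `[0, 1] -> 0 <= t /\ t <= 1.
Proof. by rewrite in_itv /= => /andP. Qed.

Lemma abs01 (t : R) : t \in `[0, 1] -> `|t| <= 1.
Proof. by move/in01 => [t0 t1]; rewrite ger0_norm. Qed.

Lemma mulu_le (s t u : R) : u \in `[0, 1] -> `|s * u - t * u| <= `|s - t|.
Proof.
move/in01 => [u0 u1]; rewrite -mulrBl normrM (ger0_norm u0).
by rewrite ler_piMr.
Qed.

End S.

Unset Implicit Arguments.

Theorem lemma4p3 (R : realType) (n : nat)
    (g : 'rV[R]_n -> 'rV[R]_n -> R) (P : 'M[R]_n)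
    (Rc : R -> 'M[R]_n) (Y : R -> 'rV[R]_n) :
  sym_nondeg_bilinear g ->
  {within `[0%R, 1%R], continuous Rc} ->
  {within `[0%R, 1%R], continuous Y} ->
  {within `[0%R, 1%R], continuous (derive1 Y)} ->
  (forall t, t \in `]0%R, 1%R[ ->
     derivable Y t 1 /\ derivable (derive1 Y) t 1 /\
     derive1 (derive1 Y) t = Y t *m Rc t) ->
  (forall t, t \in `[0%R, 1%R] -> g (Y t) (Y t) < 0) ->
  C1_opfamily P (Fop g Y).
Proof.
move=> hg cRc cY cdY hd _.
pose c i j := g (delta_mx 0 i) (delta_mx 0 j).
pose h0 i x := \sum_(j < n) c i j * Y x ord0 j.
pose h1 i x := \sum_(j < n) c i j * derive1 Y x ord0 j.
pose h2 i x := \sum_(j < n) c i j * (Y x *m Rc x) ord0 j.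
have ch0 : forall i, {within `[0, 1], continuous (h0 i)}.
  move=> i; apply: wc_sum => j; apply: wc_mul; [exact: wc_cst | exact: wc_coord].
have ch1 : forall i, {within `[0, 1], continuous (h1 i)}.
  move=> i; apply: wc_sum => j; apply: wc_mul; [exact: wc_cst | exact: wc_coord].
have ch2 : forall i, {within `[0, 1], continuous (h2 i)}.
  move=> i; apply: wc_sum => j; apply: wc_mul; first exact: wc_cst.
  have -> : (fun x => (Y x *m Rc x) ord0 j) = (fun x => \sum_(k < n) Y x ord0 k * Rc x k j).
    by apply/funext => x; rewrite mxE.
  apply: wc_sum => k; apply: wc_mul; exact: wc_coord.
have dh0 : forall (i : 'I_n) (x : R), x \in `]0, 1[ -> is_derive x 1 (h0 i) (h1 i x).
  move=> i x x01.
  apply: (der_comb (f := fun j x => Y x ord0 j) (df := fun j x => derive1 Y x ord0 j)) => j.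
  exact: der_coord (hd x x01).1.
have dh1 : forall (i : 'I_n) (x : R), x \in `]0, 1[ -> is_derive x 1 (h1 i) (h2 i x).
  move=> i x x01.
  apply: (der_comb (f := fun j x => derive1 Y x ord0 j) (df := fun j x => (Y x *m Rc x) ord0 j)) => j.
  have [_ [d2 e2]] := hd x x01.
  by have := der_coord j d2; rewrite e2.
have Fexp : forall s V W u, Fop g Y s V W u =
    \sum_(i < n) (W u ord0 i * h0 i (s * u) + V u ord0 i * - (s * h1 i (s * u))).
  move=> s V W u; rewrite /Fop !(glin hg) mulr_sumr -sumrN -big_split /=.
  by apply: eq_bigr => i _; rewrite /h0 /h1 /c; ring.
have mc : forall (k : R -> R) (s : R), {within `[0, 1], continuous k} -> s \in `[0, 1] ->
    measurable_fun (`[0%R, 1%R] : set R) (fun u => k (s * u)).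
  by move=> k s ck s01; apply: meas_comp => //; exact: meas_h.
have [M0 [M00 HM0]] := fam_bnd (fun i => bnd (ch0 i)).
have [M1 [M10 HM1]] := fam_bnd (fun i => bnd (ch1 i)).
have [M2 [M20 HM2]] := fam_bnd (fun i => bnd (ch2 i)).
pose N : R := 2 ^+ n.+1.
have N1 : 1 <= N by rewrite /N exprn_ege1 //; lra.
pose G := fun (t : R) (V W : R -> 'rV[R]_n) (u : R) => \sum_(i < n)
  (W u ord0 i * (u * h1 i (t * u)) + V u ord0 i * - (h1 i (t * u) + t * (u * h2 i (t * u)))).
split.
  move=> t t01; exists (N * (M0 + M1) ^+ 2) => V W hH.
  apply: (KB (A := fun i u => h0 i (t * u)) (B := fun i u => - (t * h1 i (t * u))) hH).
  - by move=> i; exact: mc.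
  - by move=> i; apply: meas_opp; apply: meas_scal; exact: mc.
  - move=> i u u01; have tu := mul01 t01 u01; split.
      by have := HM0 i _ tu; lra.
    rewrite normrN normrM; have := HM1 i _ tu; have := abs01 t01.
    have := normr_ge0 t; have := normr_ge0 (h1 i (t * u)); nra.
  - by move=> u _; exact: Fexp.
exists G; split.
  move=> t V W t01 hH.
  apply: (meas_form (A := fun i u => u * h1 i (t * u))
     (B := fun i u => - (h1 i (t * u) + t * (u * h2 i (t * u)))) hH) => i.
    by apply: meas_mulid; exact: mc.
  apply: meas_opp; apply: meas_add; first exact: mc.
  by apply: meas_scal; apply: meas_mulid; exact: mc.
split.
  move=> t t01; exists (N * (M1 + M2) ^+ 2) => V W hH.
  apply: (KB (A := fun i u => u * h1 i (t * u))
     (B := fun i u => - (h1 i (t * u) + t * (u * h2 i (t * u)))) hH).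
  - by move=> i; apply: meas_mulid; exact: mc.
  - move=> i; apply: meas_opp; apply: meas_add; first exact: mc.
    by apply: meas_scal; apply: meas_mulid; exact: mc.
  - move=> i u u01; have tu := mul01 t01 u01; split.
      rewrite normrM; have := HM1 i _ tu; have := abs01 u01.
      have := normr_ge0 u; have := normr_ge0 (h1 i (t * u)); nra.
    rewrite normrN; apply: (le_trans (ler_normD _ _)); rewrite !normrM.
    have := HM1 i _ tu; have := HM2 i _ tu; have := abs01 u01; have := abs01 t01.
    have := normr_ge0 u; have := normr_ge0 t; have := normr_ge0 (h2 i (t * u)).
    move=> a b c' d e f g'.
    have h3 : `|u| * `|h2 i (t * u)| <= M2.
      by rewrite -[M2]mul1r; apply: ler_pM.
    have h4 : `|t| * (`|u| * `|h2 i (t * u)|) <= M2.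
      by rewrite -[M2]mul1r; apply: ler_pM => //; rewrite mulr_ge0.
    lra.
  - by move=> u _.
split.
  move=> t t01 eps eps0.
  have N0 : 0 < N by lra.
  pose e' := eps / N.
  have e'0 : 0 < e' by rewrite divr_gt0.
  have [d0 d00 Hd0] := tay_fam ch0 dh0 ch1 e'0.
  have e'20 : 0 < e' / 2 by rewrite divr_gt0.
  have [d1 d10 Hd1] := tay_fam ch1 dh1 ch2 e'20.
  have d20 : 0 < e' / (2 * (M2 + 1)) by rewrite divr_gt0 //; lra.
  exists (Num.min (Num.min d0 d1) (e' / (2 * (M2 + 1)))).
    by rewrite !lt_min d00 d10 d20.
  move=> s s01; rewrite !lt_min => /andP[/andP[sd0 sd1] sd2] V W hH.
  apply: le_trans (KB (m := e' * `|s - t|)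
    (A := fun i u => h0 i (s * u) - h0 i (t * u) - (s - t) * (u * h1 i (t * u)))
    (B := fun i u => - (s * (h1 i (s * u) - h1 i (t * u) - (s - t) * (u * h2 i (t * u)))
                        + (s - t) ^+ 2 * (u * h2 i (t * u)))) hH _ _ _ _) _.
  - move=> i; apply: meas_sub; first by apply: meas_sub; exact: mc.
    by apply: meas_scal; apply: meas_mulid; exact: mc.
  - move=> i; apply: meas_opp; apply: meas_add.
      apply: meas_scal; apply: meas_sub; first by apply: meas_sub; exact: mc.
      by apply: meas_scal; apply: meas_mulid; exact: mc.
    by apply: meas_scal; apply: meas_mulid; exact: mc.
  - move=> i u u01; split; first exact: Hd0.
    have X := Hd1 i s t u s01 t01 u01 sd1.
    set x := h1 i (s * u) - _ - _ in X *.
    have tu := mul01 t01 u01.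
    have hw : `|u * h2 i (t * u)| <= M2.
      rewrite normrM -[M2]mul1r; apply: ler_pM => //; first exact: abs01.
      exact: HM2.
    have s1 := abs01 s01.
    rewrite normrN; apply: (le_trans (ler_normD _ _)); rewrite !normrM.
    have a0 := normr_ge0 (s - t).
    have sx : `|s| * `|x| <= e' / 2 * `|s - t|.
      by rewrite -[X in _ <= X]mul1r; apply: ler_pM.
    have hsq : `|(s - t) ^+ 2| = `|s - t| * `|s - t| by rewrite normrX expr2.
    have hM : `|s - t| * M2 <= e' / 2.
      have := sd2; rewrite ltr_pdivlMr; last lra.
      have := normr_ge0 (s - t); nra.
    move: hw; rewrite normrM => hw.
    have w0 : 0 <= `|u| * `|h2 i (t * u)| by rewrite mulr_ge0.
    have h5 : `|s - t| * `|s - t| * (`|u| * `|h2 i (t * u)|) <= `|s - t| * `|s - t| * M2.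
      by apply: ler_wpM2l => //; rewrite mulr_ge0.
    have h6 : `|s - t| * `|s - t| * M2 <= `|s - t| * (e' / 2).
      by rewrite -mulrA; apply: ler_wpM2l.
    lra.
  - move=> u u01; rewrite !Fexp /G mulr_sumr -!sumrB; apply: eq_bigr => i _; ring.
  apply: le_H.
  have key : N * e' ^+ 2 <= eps ^+ 2 := Nbound _ N1.
  have sq : (s - t) ^+ 2 = `|s - t| ^+ 2 by rewrite real_normK ?num_real.
  rewrite !exprMn sq mulrA; apply: ler_wpM2r; [exact: sqr_ge0 | by move: key; rewrite exprMn].
move=> t t01 eps eps0.
have N0 : 0 < N by lra.
pose m := eps / N.
have m0 : 0 < m by rewrite divr_gt0.
have m30 : 0 < m / 3 by rewrite divr_gt0.
have [u1 u10 Hu1] := unif_fam ch1 m30.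
have [u2 u20 Hu2] := unif_fam ch2 m30.
have d20 : 0 < m / (3 * (M2 + 1)) by rewrite divr_gt0 //; lra.
exists (Num.min (Num.min u1 u2) (m / (3 * (M2 + 1)))).
  by rewrite !lt_min u10 u20 d20.
move=> s s01; rewrite !lt_min => /andP[/andP[sd1 sd2] sd3] V W hH.
apply: le_trans (KB (m := m)
  (A := fun i u => u * h1 i (s * u) - u * h1 i (t * u))
  (B := fun i u => - (h1 i (s * u) + s * (u * h2 i (s * u))) - - (h1 i (t * u) + t * (u * h2 i (t * u))))
  hH _ _ _ _) _.
- by move=> i; apply: meas_sub; apply: meas_mulid; exact: mc.
- move=> i; apply: meas_sub; apply: meas_opp; apply: meas_add; try exact: mc;
    by apply: meas_scal; apply: meas_mulid; exact: mc.
- move=> i u u01.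
  have su := mul01 s01 u01; have tu := mul01 t01 u01.
  have stu : `|s * u - t * u| < u1 by exact: le_lt_trans (mulu_le _ _ u01) sd1.
  have stu2 : `|s * u - t * u| < u2 by exact: le_lt_trans (mulu_le _ _ u01) sd2.
  have e1 := Hu1 i _ _ su tu stu.
  have e2 := Hu2 i _ _ su tu stu2.
  have uu := abs01 u01; have ss := abs01 s01; have tt := abs01 t01.
  have b2 := HM2 i _ su.
  split.
    rewrite -mulrBr normrM.
    have := normr_ge0 u; have := normr_ge0 (h1 i (s * u) - h1 i (t * u)).
    move=> a b.
    have : `|u| * `|h1 i (s * u) - h1 i (t * u)| <= `|h1 i (s * u) - h1 i (t * u)|.
      by rewrite ler_piMl.
    lra.
  have -> : - (h1 i (s * u) + s * (u * h2 i (s * u))) - - (h1 i (t * u) + t * (u * h2 i (t * u)))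
      = - (h1 i (s * u) - h1 i (t * u)) - u * ((s - t) * h2 i (s * u))
        - u * (t * (h2 i (s * u) - h2 i (t * u))) by ring.
  apply: (le_trans (ler_normB _ _)); apply: (le_trans (lerD (ler_normB _ _) (lexx _))).
  rewrite normrN !normrM.
  have a0 := normr_ge0 (s - t); have a1 := normr_ge0 u; have a2 := normr_ge0 t.
  have a3 := normr_ge0 (h2 i (s * u)); have a4 := normr_ge0 (h2 i (s * u) - h2 i (t * u)).
  have f1 : `|u| * (`|s - t| * `|h2 i (s * u)|) <= `|s - t| * M2.
    rewrite -[X in _ <= X]mul1r; apply: ler_pM => //.
    by apply: ler_wpM2l.
  have f2 : `|u| * (`|t| * `|h2 i (s * u) - h2 i (t * u)|) <= m / 3.
    rewrite -[X in _ <= X]mul1r; apply: ler_pM => //.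
    rewrite -[X in _ <= X]mul1r; apply: ler_pM => //; exact: ltW.
  have f3 : `|s - t| * M2 <= m / 3.
    have := sd3; rewrite ltr_pdivlMr; last lra.
    nra.
  lra.
- move=> u u01; rewrite /G -sumrB; apply: eq_bigr => i _; ring.
apply: le_H.
have key : N * m ^+ 2 <= eps ^+ 2 := Nbound _ N1.
exact: key.
Qed.
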